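(* There is a function $\varepsilon:\mathbb{N}\to\mathbb{R}_{\ge0}$ with $\varepsilon(n)\to 0$ as $n\to\infty$ such that every $(1,1)$-criss-cross deletion correcting code $\mathcal{C}\subseteq\{0,1\}^{n\times n}$ satisfies $$|\mathcal{C}|\le (1+\varepsilon(n))\,\frac{2^{n^2}}{2^{2n-1}\cdot \frac{n^2}{2}}.$$ Consequently the redundancy $n^2-\log_2|\mathcal{C}|$ is asymptotically at least $2n-2+2\log_2 n$.
   Context: For a binary array $\mathbf{X}$, $\mathbb{D}_{1,1}(\mathbf{X})$ is the set of arrays obtained from $\mathbf{X}$ by deleting one row and one column. A code $\mathcal{C}\subseteq\{0,1\}^{n\times n}$ is a $(1,1)$-criss-cross deletion correcting code if $\mathbb{D}_{1,1}(\mathbf{X})\cap\mathbb{D}_{1,1}(\mathbf{Y})=\emptyset$ for all distinct $\mathbf{X},\mathbf{Y}\in\mathcal{C}$. The redundancy of $\mathcal{C}$ is $n^2-\log_2|\mathcal{C}|$. *)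

(* Defs.v *)
From HB Require Import structures.
From mathcomp Require Import all_boot all_order all_algebra.
From mathcomp Require Import all_classical all_reals all_analysis.
Set Implicit Arguments. Unset Strict Implicit. Unset Printing Implicit Defensive.
Import Order.TTheory GRing.Theory Num.Theory.

Definition D11 (m : nat) (X : 'M[bool]_m.+1) : {set 'M[bool]_m} :=
  [set row' i (col' j X) | i : 'I_m.+1, j : 'I_m.+1].

Definition cc_code (m : nat) (C : {set 'M[bool]_m.+1}) : Prop :=
  forall X Y, X \in C -> Y \in C -> X != Y -> [disjoint D11 X & D11 Y].

(* Main.v *)
Require Import Defs.
From HB Require Import structures.
From mathcomp Require Import all_boot all_order all_algebra.
From mathcomp Require Import zify.
Set Implicit Arguments. Unset Strict Implicit. Unset Printing Implicit Defensive.

Section S.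
Variable m : nat.
Definition bg (X : 'M[bool]_m.+1) (g : 'I_m) : bool :=
  [exists a : 'I_m.+1, exists b : 'I_m.+1, [forall c : 'I_m,
     X (lift ord0 g) (lift a c) == X (widen_ord (leqnSn m) g) (lift b c)]].

Lemma coll_row (X : 'M[bool]_m.+1) (i i' j j' : 'I_m.+1) :
  i < i' -> row' i (col' j X) = row' i' (col' j' X) ->
  exists g : 'I_m, val g = val i /\ bg X g.
Proof.
move=> lt E.
have him : i < m by rewrite -ltnS (leq_trans _ (ltn_ord i')).
exists (Ordinal him); split => //.
apply/existsP; exists j; apply/existsP; exists j'; apply/forallP => c.
have e1 : lift ord0 (Ordinal him) = lift i (Ordinal him).
  by apply/val_inj; rewrite /= /bump /= leqnn.
have e2 : widen_ord (leqnSn m) (Ordinal him) = lift i' (Ordinal him).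
  by apply/val_inj; rewrite /= /bump leqNgt lt.
rewrite e1 e2.
have := congr1 (fun A : 'M[bool]_m => A (Ordinal him) c) E; rewrite !mxE => ->.
by [].
Qed.

Lemma coll_col (X : 'M[bool]_m.+1) (i j j' : 'I_m.+1) :
  j < j' -> row' i (col' j X) = row' i (col' j' X) ->
  exists g : 'I_m, val g = val j /\ bg X^T g.
Proof.
move=> lt E.
have him : j < m by rewrite -ltnS (leq_trans _ (ltn_ord j')).
exists (Ordinal him); split => //.
apply/existsP; exists i; apply/existsP; exists i; apply/forallP => c.
have e1 : lift ord0 (Ordinal him) = lift j (Ordinal him).
  by apply/val_inj; rewrite /= /bump /= leqnn.
have e2 : widen_ord (leqnSn m) (Ordinal him) = lift j' (Ordinal him).
  by apply/val_inj; rewrite /= /bump leqNgt lt.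
rewrite !mxE e1 e2.
have := congr1 (fun A : 'M[bool]_m => A c (Ordinal him)) E; rewrite !mxE => ->.
by [].
Qed.

Definition Irow (X : 'M[bool]_m.+1) : {set 'I_m.+1} :=
  [set i : 'I_m.+1 | [forall g : 'I_m, (val g == val i) ==> ~~ bg X g]].

Lemma D11_ge (X : 'M[bool]_m.+1) : #|Irow X| * #|Irow X^T| <= #|D11 X|.
Proof.
pose f := fun p : 'I_m.+1 * 'I_m.+1 => (row' p.1 (col' p.2 X) : 'M[bool]_m).
have inj : {in setX (Irow X) (Irow X^T) &, injective f}.
  move=> [i j] [i' j'] /setXP[/= Hi Hj] /setXP[/= Hi' Hj'] E; rewrite /f /= in E.
  have noR : forall k k' : 'I_m.+1, k \in Irow X -> k < k' -> ~ (exists g : 'I_m, val g = val k /\ bg X g).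
    move=> k k' Hk _ [g [eg bgg]]; move: Hk; rewrite inE => /forallP/(_ g).
    by rewrite eg eqxx bgg.
  have noC : forall k k' : 'I_m.+1, k \in Irow X^T -> k < k' -> ~ (exists g : 'I_m, val g = val k /\ bg X^T g).
    move=> k k' Hk _ [g [eg bgg]]; move: Hk; rewrite inE => /forallP/(_ g).
    by rewrite eg eqxx bgg.
  case: (ltngtP i i') => [lt|lt|eqi].
  - by case: (noR _ _ Hi lt (coll_row lt E)).
  - by case: (noR _ _ Hi' lt (coll_row lt (esym E))).
  have {eqi} eqi : i = i' by apply/val_inj.
  subst i'.
  case: (ltngtP j j') => [lt|lt|eqj].
  - by case: (noC _ _ Hj lt (coll_col lt E)).
  - by case: (noC _ _ Hj' lt (coll_col lt (esym E))).
  by rewrite (val_inj eqj).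
rewrite -cardsX -(card_in_imset inj); apply: subset_leq_card.
apply/subsetP => _ /imsetP[[i j] _ ->]; rewrite /D11.
by apply/imset2P; exists i j.
Qed.

Definition BR (X : 'M[bool]_m.+1) : {set 'I_m} := [set g | bg X g].

Lemma Irow_ge (X : 'M[bool]_m.+1) : m.+1 <= #|Irow X| + #|BR X|.
Proof.
have sub : ~: Irow X \subset widen_ord (leqnSn m) @: BR X.
  apply/subsetP => i; rewrite !inE => /forallPn[g]; rewrite negb_imply negbK => /andP[/eqP eg bgg].
  apply/imsetP; exists g; first by rewrite inE.
  by apply/val_inj.
have := leq_trans (subset_leq_card sub) (leq_imset_card _ _).
move=> H; have := cardsC (Irow X); rewrite card_ord => E.
by rewrite -{1}E leq_add2l.
Qed.

Lemma count_rigid (n : nat) (A : pred 'M[bool]_n) (Q : {set 'I_n * 'I_n}) :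
  (forall X Y, A X -> A Y -> (forall p, p \in Q -> X p.1 p.2 = Y p.1 p.2) -> X = Y) ->
  #|[set X | A X]| <= 2 ^ #|Q|.
Proof.
move=> rig.
pose f := fun X : 'M[bool]_n => ([ffun p : {p | p \in Q} => X (val p).1 (val p).2] : {ffun {p | p \in Q} -> bool}).
have : #|[set X | A X]| <= #|{ffun {p | p \in Q} -> bool}|.
  apply: (@leq_card_in _ _ f) => X Y; rewrite !inE => AX AY E.
  apply: rig => // p pQ.
  by have := congr1 (fun F : {ffun {p | p \in Q} -> bool} => F (exist _ p pQ)) E; rewrite !ffunE.
by rewrite card_ffun card_bool card_sig.
Qed.

Definition wtype := ('I_m * 'I_m.+1 * 'I_m.+1 * bool)%type.
Definition wit (X : 'M[bool]_m.+1) (w : wtype) : bool :=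
  [forall c : 'I_m, X (lift ord0 w.1.1.1) (lift w.1.1.2 c)
        == X (widen_ord (leqnSn m) w.1.1.1) (lift w.1.2 c)]
  && (X (lift ord0 w.1.1.1) w.1.1.2 == w.2).
Definition sep (k : {ffun 'I_3 -> wtype}) : bool :=
  [forall s, forall t, (s != t) ==>
     ((k s).1.1.1 != (k t).1.1.1) && ((k s).1.1.1.+1 != (k t).1.1.1)].
Definition W (X : 'M[bool]_m.+1) (k : {ffun 'I_3 -> wtype}) : bool :=
  sep k && [forall s, wit X (k s)].
Definition Qk (k : {ffun 'I_3 -> wtype}) : {set 'I_m.+1 * 'I_m.+1} :=
  [set p | [forall s, p.1 != lift ord0 (k s).1.1.1]].

Lemma W_rigid k X Y : W X k -> W Y k ->
  (forall p, p \in Qk k -> X p.1 p.2 = Y p.1 p.2) -> X = Y.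
Proof.
move=> /andP[sk /forallP wX] /andP[_ /forallP wY] agr.
apply/matrixP => r c.
case: (boolP [forall s, r != lift ord0 (k s).1.1.1]) => H.
  by apply: (agr (r, c)); rewrite inE.
move/forallPn: H => [s]; rewrite negbK => /eqP ->.
case/andP: (wX s) => /forallP wXc /eqP wXt.
case/andP: (wY s) => /forallP wYc /eqP wYt.
case: (unliftP (k s).1.1.2 c) => [c'|] ->; last by rewrite wXt wYt.
rewrite (eqP (wXc c')) (eqP (wYc c')).
apply: (agr (_, _)); rewrite inE; apply/forallP => t /=.
apply/negP => /eqP/(congr1 val); rewrite /= /bump /= add1n => E.
case: (eqVneq s t) => [st|st].
  by subst t; lia.
move: sk => /forallP/(_ t)/forallP/(_ s); rewrite eq_sym st /= => /andP[_].
by rewrite E eqxx.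
Qed.

Lemma card_Qk k : sep k -> #|Qk k| + 3 * m.+1 = m.+1 * m.+1.
Proof.
move=> sk.
pose Rs := [set lift ord0 (k s).1.1.1 | s : 'I_3].
have cR : #|Rs| = 3.
  rewrite card_in_imset ?card_ord // => s t _ _ /(congr1 val) /=.
  rewrite /bump /= !add1n => /eqP; rewrite eqSS => /eqP E.
  apply/eqP; apply/negPn/negP => st.
  move: sk => /forallP/(_ s)/forallP/(_ t); rewrite st /=.
  by rewrite (val_inj E) eqxx.
have eQ : #|Qk k| = #|setX (~: Rs) [set: 'I_m.+1]|.
  apply: eq_card => p; rewrite !inE andbT.
  apply/forallP/negP => [H /imsetP[s _ E]|H s].
    by move: (H s); rewrite E eqxx.
  by apply/negP => /eqP E; apply: H; apply/imsetP; exists s.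
rewrite eQ cardsX cardsT card_ord -mulnDl.
by have := cardsC Rs; rewrite card_ord cR addnC => ->.
Qed.

Definition RB : {set 'M[bool]_m.+1} := [set X | [exists k, W X k]].

Lemma card_RB : #|RB| * 2 ^ (3 * m.+1) <= (m * m.+1 * m.+1 * 2) ^ 3 * 2 ^ (m.+1 * m.+1).
Proof.
have step : forall k : {ffun 'I_3 -> wtype},
    #|[set X | W X k]| * 2 ^ (3 * m.+1) <= 2 ^ (m.+1 * m.+1).
  move=> k; case: (set_0Vmem [set X | W X k]) => [->|[X]].
    by rewrite cards0.
  rewrite inE => /andP[sk _].
  rewrite -(card_Qk sk) expnD leq_mul2r; apply/orP; right.
  apply: count_rigid => X1 Y1 h1 h2; exact: W_rigid.
have : #|RB| <= \sum_(k : {ffun 'I_3 -> wtype}) #|[set X | W X k]|.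
  rewrite -sum1_card.
  have -> : \sum_(k : {ffun 'I_3 -> wtype}) #|[set X | W X k]| =
     \sum_(k : {ffun 'I_3 -> wtype}) \sum_(X : 'M[bool]_m.+1) (W X k : nat).
    apply: eq_bigr => k _; rewrite -sum1_card big_mkcond /=.
    by apply: eq_bigr => X _; rewrite inE; case: (W X k).
  rewrite exchange_big /=.
  rewrite [X in X <= _]big_mkcond /=; apply: leq_sum => X _.
  case: ifP => //; rewrite inE => /existsP[k Wk].
  by rewrite (bigD1 k) //= Wk.
move=> H; apply: (leq_trans (leq_mul H (leqnn _))).
rewrite big_distrl /=.
apply: (@leq_trans (\sum_(k : {ffun 'I_3 -> wtype}) 2 ^ (m.+1 * m.+1))).
  by apply: leq_sum => k _; exact: step.
rewrite sum_nat_const card_ffun card_ord !card_prod !card_ord card_bool.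
by [].
Qed.

Definition wof (X : 'M[bool]_m.+1) (g : 'I_m) : wtype :=
  let ab := odflt (ord0, ord0) [pick ab : 'I_m.+1 * 'I_m.+1 | [forall c : 'I_m,
     X (lift ord0 g) (lift ab.1 c) == X (widen_ord (leqnSn m) g) (lift ab.2 c)]] in
  (g, ab.1, ab.2, X (lift ord0 g) ab.1).

Lemma wof_wit X g : bg X g -> wit X (wof X g).
Proof.
move=> /existsP[a /existsP[b H]].
rewrite /wof /wit /=; case: pickP => [ab Hab|none] /=.
  by rewrite Hab eqxx.
by move: (none (a, b)); rewrite /= H.
Qed.

Lemma par_sep (u v : 'I_m) : odd u = odd v -> u != v ->
  (u != v) && ((u : nat).+1 != v).
Proof.
move=> ho uv; rewrite uv /=; apply/negP => /eqP E.
by move: ho; rewrite -E /= => /eqP; rewrite eq_sym; case: (odd u).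
Qed.

Lemma three_RB X (S : {set 'I_m}) (par : bool) : 2 < #|S| ->
  (forall g, g \in S -> bg X g /\ odd g = par) -> X \in RB.
Proof.
move=> /card_gt2P [x [y [z [[xS yS zS] [xy yz zx]]]]] H.
have [bx px] := H _ xS; have [by' py] := H _ yS; have [bz pz] := H _ zS.
pose k := [ffun s : 'I_3 => wof X (nth x [:: x; y; z] s)].
rewrite inE; apply/existsP; exists k; apply/andP; split.
  apply/forallP => s; apply/forallP => t; apply/implyP => st.
  rewrite !ffunE /=.
  have P : forall u v, u \in S -> v \in S -> u != v -> (u != v) && ((u : nat).+1 != v).
    move=> u v uS vS uv; apply: par_sep => //.
    by rewrite (H _ uS).2 (H _ vS).2.
  move: st; case: s => [[|[|[|?]]] ?]; case: t => [[|[|[|?]]] ?] //= st;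
  apply: P => //; try by rewrite eq_sym.
apply/forallP => s; rewrite ffunE; apply: wof_wit.
by case: s => [[|[|[|?]]] ?] //=.
Qed.

Lemma BR_RB X : 4 < #|BR X| -> X \in RB.
Proof.
move=> h.
have := cardsID [set g : 'I_m | odd g] (BR X).
case: (ltnP 2 #|BR X :&: [set g : 'I_m | odd g]|) => [h1|h1].
  move=> _; apply: (three_RB (par := true) h1) => g; rewrite !inE => /andP[-> ->].
  by [].
case: (ltnP 2 #|BR X :\: [set g : 'I_m | odd g]|) => [h2|h2].
  move=> _; apply: (three_RB (par := false) h2) => g; rewrite !inE => /andP[/negbTE -> ->].
  by [].
move=> E; move: h; rewrite -E => h.
by have := leq_ltn_trans (leq_add h1 h2) h; rewrite ltnn.
Qed.

Lemma sum_D11 (A : {set 'M[bool]_m.+1}) : cc_code A -> \sum_(X in A) #|D11 X| <= 2 ^ (m * m).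
Proof.
move=> cc.
pose F := fun X : 'M[bool]_m.+1 => if X \in A then D11 X else set0.
have disj : forall X Y, X != Y -> [disjoint F X & F Y].
  move=> X Y XY; rewrite /F; case: ifP => hX; case: ifP => hY;
  rewrite -?setI_eq0 ?set0I ?setI0 //.
  by rewrite setI_eq0; apply: cc.
have := partition_disjoint_bigcup addn (fun _ => 1) disj; rewrite sum1_card => E.
have -> : \sum_(X in A) #|D11 X| = \sum_X \sum_(x in F X) 1.
  rewrite big_mkcond /=; apply: eq_bigr => X _; rewrite sum1_card /F.
  by case: ifP => _ //; rewrite cards0.
rewrite -E; apply: leq_trans (max_card _) _.
by rewrite card_mx card_bool.
Qed.

Definition Bad : {set 'M[bool]_m.+1} := [set X | #|D11 X| * 2 < m.+1 * m.+1].

Lemma Bad_sub (X : 'M[bool]_m.+1) : 13 <= m -> X \in Bad -> (X \in RB) || ((trmx X) \in RB).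
Proof.
move=> hm; rewrite inE => hB.
case: (ltnP 4 #|BR X|) => [h|h]; first by rewrite BR_RB.
case: (ltnP 4 #|BR (trmx X)|) => [h'|h']; first by apply/orP; right; apply: BR_RB.
exfalso.
have i1 := Irow_ge X; have i2 := Irow_ge (trmx X); have d := D11_ge X.
move: hB i1 i2 d h h'.
move: #|D11 X| #|Irow X| #|Irow (trmx X)| #|BR X| #|BR (trmx X)| => d a b r r' hB i1 i2 hd hr hr'.
have ha : m - 3 <= a by lia.
have hb : m - 3 <= b by lia.
have := leq_mul ha hb.
nia.
Qed.

Lemma card_Bad : 13 <= m -> #|Bad| <= 2 * #|RB|.
Proof.
move=> hm.
have sub : Bad \subset RB :|: trmx @: RB.
  apply/subsetP => X XB; rewrite inE.
  case/orP: (Bad_sub hm XB) => [->//|h]; apply/orP; right.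
  by apply/imsetP; exists (trmx X) => //; rewrite trmxK.
apply: leq_trans (subset_leq_card sub) _.
apply: leq_trans (leq_card_setU _ _) _.
by rewrite mul2n -addnn leq_add2l leq_imset_card.
Qed.

Lemma code_bound (C : {set 'M[bool]_m.+1}) : cc_code C ->
  #|C| * (m.+1 * m.+1) <= 2 * 2 ^ (m * m) + #|Bad| * (m.+1 * m.+1).
Proof.
move=> cc.
have cc' : cc_code (C :\: Bad).
  by move=> X Y; rewrite !inE => /andP[_ hX] /andP[_ hY]; apply: cc.
have s1 := sum_D11 cc'.
have s2 : #|C :\: Bad| * (m.+1 * m.+1) <= 2 * \sum_(X in C :\: Bad) #|D11 X|.
  rewrite -sum1_card big_distrl big_distrr /=; apply: leq_sum => X.
  rewrite !inE => /andP[hX _]; move: hX; rewrite -leqNgt mul1n mulnC.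
  by [].
have := cardsID Bad C => E.
rewrite -E addnC mulnDl; apply: leq_add.
  apply: leq_trans s2 _; rewrite leq_mul2l; apply/orP; right; exact: s1.
by rewrite leq_mul2r subset_leq_card ?orbT // subsetIr.
Qed.

Lemma pow_le x k : 0 < k -> x ^ k <= k ^ k * 2 ^ x.
Proof.
move=> kp; set q := x %/ k.
have h1 : x < q.+1 * k := ltn_ceil x kp.
have h2 : q.+1 <= 2 ^ q := ltn_expl q (isT : 1 < 2).
have h3 : x <= k * 2 ^ q.
  by apply: ltnW; apply: (leq_trans h1); rewrite mulnC leq_mul2l h2 orbT.
apply: (@leq_trans ((k * 2 ^ q) ^ k)); first by rewrite leq_exp2r.
rewrite expnMn leq_mul2l; apply/orP; right.
rewrite -expnM mulnC; apply: leq_pexp2l => //.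
by rewrite mulnC leq_trunc_div.
Qed.

Lemma Bad_nat : 13 <= m ->
  #|Bad| * m.+1 ^ 3 <= 4 * 12 ^ 12 * 2 ^ (m * m + 1).
Proof.
move=> hm.
have hRB := card_RB.
have hB := card_Bad hm.
have P := pow_le m.+1 (isT : 0 < 12).
rewrite -(@leq_pmul2r (2 ^ (3 * m.+1))) ?expn_gt0 //.
have eA : 2 ^ (m * m + 1) * 2 ^ (3 * m.+1) = 2 ^ (m.+1 * m.+1) * 2 ^ m * 8.
  rewrite -!expnD (_ : 8 = 2 ^ 3) // -expnD; congr (2 ^ _); nia.
have eM : 2 ^ m.+1 = 2 * 2 ^ m by rewrite expnS.
have hm3 : (m * m.+1 * m.+1 * 2) ^ 3 * m.+1 ^ 3 <= 8 * m.+1 ^ 12.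
  have h1 : m * m.+1 * m.+1 * 2 <= 2 * m.+1 ^ 3.
    have -> : m.+1 ^ 3 = m.+1 * (m.+1 * m.+1) by rewrite !expnS expn0 muln1.
    nia.
  have h2 : (m * m.+1 * m.+1 * 2) ^ 3 * m.+1 ^ 3 <= (2 * m.+1 ^ 3) ^ 3 * m.+1 ^ 3.
    by rewrite leq_mul2r leq_exp2r // h1.
  apply: (leq_trans h2).
  by rewrite expnMn -expnM -mulnA -expnD.
move: hRB hB P eA eM hm3.
move: #|Bad| #|RB| (2 ^ (m * m + 1)) (2 ^ (3 * m.+1)) (2 ^ (m.+1 * m.+1)) (2 ^ m) (2 ^ m.+1)
  ((m * m.+1 * m.+1 * 2) ^ 3) (m.+1 ^ 3) (m.+1 ^ 12) => b r A T N M M1 Q n3 n12.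
move=> hRB hB P eA eM hm3.
rewrite -[X in _ <= X]mulnA eA; subst M1.
move: (12 ^ 12) P => c P.
have -> : b * n3 * T = b * T * n3 by nia.
apply: (leq_trans (leq_mul (leq_mul hB (leqnn T)) (leqnn n3))).
have -> : 2 * r * T * n3 = 2 * (r * T) * n3 by nia.
apply: (leq_trans (leq_mul (leq_mul (leqnn 2) hRB) (leqnn n3))).
have -> : 2 * (Q * N) * n3 = 2 * N * (Q * n3) by nia.
apply: (leq_trans (leq_mul (leqnn _) hm3)).
have -> : 2 * N * (8 * n12) = 16 * N * n12 by nia.
apply: (leq_trans (leq_mul (leqnn _) P)).
have -> : 4 * c * (N * M * 8) = 16 * N * (c * (2 * M)) by nia.
by [].
Qed.
End S.

From mathcomp Require Import all_classical all_reals all_analysis.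
From mathcomp Require Import ring.
Import Order.TTheory GRing.Theory Num.Theory.
Import numFieldNormedType.Exports.
Local Open Scope classical_set_scope.
Local Open Scope ring_scope.

Theorem theorem2 (R : realType) :
  exists eps : nat -> R,
    (forall n, 0 <= eps n) /\ (eps @ \oo --> (0 : R)) /\
    forall (m : nat) (C : {set 'M[bool]_m.+1}), cc_code C ->
      let n := m.+1 in
      (#|C|%:R : R) <=
        (1 + eps n) * ((2 : R) ^+ (n * n)
                       / ((2 : R) ^+ (2 * n - 1) * ((n * n)%:R / 2))).
Proof.
pose eps := fun n : nat => match n with 0%N => 0 | m.+1 =>
  (#|Bad m|%:R * (m.+1 * m.+1)%:R) / (2 : R) ^+ (m * m + 1) end.
exists eps; split; [|split].
- case => [|m] //=; apply: divr_ge0 => //.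
- rewrite -cvg_shiftS /=.
  pose K : R := (4 * 12 ^ 12)%N%:R.
  apply: (@squeeze_cvgr _ _ _ _ (fun _ => 0) (fun n => K * harmonic n)).
  + exists 13%N => // n /= hn; apply/andP; split.
      by apply: divr_ge0.
    rewrite ler_pdivrMr ?exprn_gt0 // mulrAC ler_pdivlMr ?ltr0n //.
    rewrite /K -!natrM -natrX -natrM ler_nat.
    have := Bad_nat hn.
    move: (12 ^ 12)%N => c.
    rewrite (expnS _ 2) (expnS _ 1) expn1.
    have -> : (#|Bad n| * (n.+1 * n.+1) * n.+1 = #|Bad n| * (n.+1 * (n.+1 * n.+1)))%N by lia.
    by [].
  + exact: cvg_cst.
  + rewrite -(mulr0 K); apply: cvgMl_tmp; exact: cvg_harmonic.
- move=> m C cc /=.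
  have hc := code_bound cc.
  have hr : (#|C|%:R * (m.+1 * m.+1)%:R : R) <=
            2 * 2 ^+ (m * m) + #|Bad m|%:R * (m.+1 * m.+1)%:R.
    by move: hc; rewrite -(ler_nat R) natrD !natrM natrX.
  have e1 : (2:R) ^+ (m.+1 * m.+1) = 2 ^+ (m * m) * 2 ^+ (2 * m.+1 - 1).
    by rewrite -exprD; congr (_ ^+ _); lia.
  have e2 : (2:R) ^+ (m * m + 1) = 2 ^+ (m * m) * 2 by rewrite exprD expr1.
  rewrite e1 e2.
  have hN : ((m.+1 * m.+1)%:R : R) != 0 by rewrite pnatr_eq0 muln_eq0.
  have hP : (2:R) ^+ (m * m) != 0 by rewrite expf_neq0.
  have hQ : (2:R) ^+ (2 * m.+1 - 1) != 0 by rewrite expf_neq0.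
  have -> : (1 + #|Bad m|%:R * (m.+1 * m.+1)%:R / (2 ^+ (m * m) * 2)) *
     (2 ^+ (m * m) * 2 ^+ (2 * m.+1 - 1) / (2 ^+ (2 * m.+1 - 1) * ((m.+1 * m.+1)%:R / 2)))
     = (2 * 2 ^+ (m * m) + #|Bad m|%:R * (m.+1 * m.+1)%:R) / (m.+1 * m.+1)%:R :> R.
    by field; rewrite hP hQ !andbT addrC natr1 pnatr_eq0.
  by rewrite ler_pdivlMr // ltr0n muln_gt0.
Qed.
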